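(* Let $d \ge 1$, $\alpha>0$, $p_0\in[1/2,1]$, and let $\mathcal{D}$ be the distribution on $\mathbb{R}^{d+1}\times\{-1,+1\}$ defined in the context, with $\eta=\alpha/\sqrt d$. Let $S_\infty$ be the $\ell_\infty$-perturbation set of radius $\epsilon=2\eta$ and $S_1$ the $\ell_1$-perturbation set of radius $\epsilon=2$. Then for every classifier $f:\mathbb{R}^{d+1}\to\{-1,+1\}$, $$\mathcal{R}^{\mathrm{avg}}_{\mathrm{adv}}(f;S_\infty,S_1)\;\ge\;\tfrac12 .$$
   Context: The distribution $\mathcal{D}$ over pairs $(\mathbf{x},y)$, $\mathbf{x}=(x_0,x_1,\dots,x_d)\in\mathbb{R}^{d+1}$, $y\in\{-1,+1\}$: $y$ is uniform on $\{-1,+1\}$; given $y$, $x_0=+y$ with probability $p_0$ and $x_0=-y$ with probability $1-p_0$; and $x_1,\dots,x_d$ are i.i.d. $\mathcal{N}(y\eta,1)$, independent of $x_0$, where $\eta=\alpha/\sqrt d$. For a set-valued perturbation model assigning to each input $\mathbf{x}$ a set $S(\mathbf{x})$ of allowed perturbed inputs, the adversarial risk of a classifier $f$ is $\mathcal{R}_{\mathrm{adv}}(f;S)=\Pr_{(\mathbf{x},y)\sim\mathcal{D}}[\exists\,\mathbf{x}'\in S(\mathbf{x}): f(\mathbf{x}')\neq y]$. The $\ell_p$-perturbation set of radius $\epsilon$ is $S(\mathbf{x})=\{\mathbf{x}+\mathbf{r}:\|\mathbf{r}\|_p\le\epsilon\}$. For perturbation sets $S_1,\dots,S_n$: $\mathcal{R}^{\mathrm{avg}}_{\mathrm{adv}}(f;S_1,\dots,S_n)=\frac1n\sum_i\mathcal{R}_{\mathrm{adv}}(f;S_i)$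 and $\mathcal{R}^{\mathrm{max}}_{\mathrm{adv}}(f;S_1,\dots,S_n)=\mathcal{R}_{\mathrm{adv}}(f;\cup_i S_i)$, where $(\cup_iS_i)(\mathbf{x})=\cup_iS_i(\mathbf{x})$. Classifiers are arbitrary measurable maps. *)

(* Defs.v *)
From HB Require Import structures.
From mathcomp Require Import all_boot all_order all_algebra.
From mathcomp Require Import all_classical all_reals all_analysis.

Set Implicit Arguments.
Unset Strict Implicit.
Unset Printing Implicit Defensive.
Import Order.TTheory GRing.Theory Num.Theory.
Local Open Scope classical_set_scope.
Local Open Scope ring_scope.

Section defs.
Context {R : realType}.

(* Labels y in {-1,+1} are encoded by bool: true <-> +1, false <-> -1. *)
Definition lab (y : bool) : R := if y then 1 else -1.

(* Inputs x = (x_0, x_1, ..., x_d) in R^{d+1}, as (d.+1)-tuples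
   (coordinate 0 is x_0).  The product (Borel) sigma-algebra on tuples
   is the library's one. *)
Definition input (d : nat) := (d.+1).-tuple R.

(* Iterated integral over n i.i.d. N(m,1) coordinates, i.e. integration
   against the product measure N(m,1)^{(x) n} (Fubini/Tonelli form). *)
Fixpoint gauss_iter (m : R) (n : nat) : (n.-tuple R -> \bar R) -> \bar R :=
  match n return (n.-tuple R -> \bar R) -> \bar R with
  | 0 => fun g => g [tuple]
  | n'.+1 => fun g =>
      (\int[normal_prob m 1]_(t in [set: R])
          @gauss_iter m n' (fun z => g [tuple of (t : R) :: z]))%E
  end.

Definition gauss_prod (m : R) (n : nat) (B : set (n.-tuple R)) : \bar R :=
  @gauss_iter m n (fun z => (\1_B z)%:E).

(* The distribution D on R^{d+1} x {-1,+1} as a set function: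
   y uniform; given y, x_0 = y w.p. p0 and x_0 = -y w.p. 1-p0;
   x_1..x_d i.i.d. N(y*eta, 1) independent of x_0, eta = alpha/sqrt d. *)
Definition Dist (d : nat) (alpha p0 : R) (A : set (input d * bool)) : \bar R :=
  let eta := alpha / Num.sqrt (d%:R) in
  (\sum_(y : bool)
     ((1/2 * p0)%R%:E *
        gauss_prod (lab y * eta)%R (fun z : d.-tuple R =>
                                    A ([tuple of lab y :: z], y)) +
      (1/2 * (1 - p0))%R%:E *
        gauss_prod (lab y * eta)%R (fun z : d.-tuple R =>
                                    A ([tuple of (- lab y)%R :: z], y))))%E.

(* Since the adversarial event need not
   be Borel, we take the inner probability (sup over measurable subsets),
   which coincides with D(E) whenever E is measurable (also in any
   completion of D). *)
Definition Dprob (d : nat) (alpha p0 : R) (E : set (input d * bool)) : \bar R :=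
  ereal_sup [set Dist alpha p0 A | A in
               [set A : set (input d * bool) | measurable A /\ A `<=` E]].

Definition linf_norm (n : nat) (r : n.-tuple R) : R :=
  \big[Num.max/0]_(i < n) `|tnth r i|.
Definition l1_norm (n : nat) (r : n.-tuple R) : R :=
  \sum_(i < n) `|tnth r i|.

Definition Sinf (n : nat) (eps : R) (x : n.-tuple R) : set (n.-tuple R) :=
  [set x' | exists r : n.-tuple R, linf_norm r <= eps /\
                        forall i, tnth x' i = tnth x i + tnth r i].
Definition S1 (n : nat) (eps : R) (x : n.-tuple R) : set (n.-tuple R) :=
  [set x' | exists r : n.-tuple R, l1_norm r <= eps /\
                        forall i, tnth x' i = tnth x i + tnth r i].

Definition Radv (d : nat) (alpha p0 : R) (f : input d -> bool)
  (S : input d -> set (input d)) : \bar R :=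
  Dprob alpha p0 [set xy | exists x', S xy.1 x' /\ f x' != xy.2].

Definition Radv_avg2 (d : nat) (alpha p0 : R) (f : input d -> bool)
  (Sa Sb : input d -> set (input d)) : \bar R :=
  ((1/2)%:E * (Radv alpha p0 f Sa + Radv alpha p0 f Sb))%E.

End defs.

(* Main.v *)
Require Import Defs.
From HB Require Import structures.
From mathcomp Require Import all_boot all_order all_algebra.
From mathcomp Require Import all_classical all_reals all_analysis.
From mathcomp Require Import measurable_realfun.
From mathcomp Require Import ring lra.
Import Order.TTheory GRing.Theory Num.Theory.
Local Open Scope classical_set_scope.
Local Open Scope ring_scope.
Section S. Variable R : realType.
Local Open Scope ereal_scope.
Definition shR (c : R) : measurableTypeR R -> measurableTypeR R := fun x => (x - c)%R.
Lemma measurable_shR c : measurable_fun setT (shR c).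
Proof. by apply: measurable_funD. Qed.

Lemma leb_shift (c : R) (A : set (measurableTypeR R)) : measurable A ->
  pushforward lebesgue_measure (shR c) A = lebesgue_measure A.
Proof.
move=> mA; apply/esym.
apply: (lebesgue_measure_unique (mu := pushforward lebesgue_measure (shR c))) => //.
- exact: measurable_shR.
- move=> _ _ [[a b]] /= _ <-.
  rewrite /pushforward.
  have -> : shR c @^-1` `]a, b]%classic = `](a + c)%R, (b + c)%R]%classic.
    apply/seteqP; split => x /=; rewrite /shR !in_itv /= ?ltrBrDr ?lerBlDr //.
  rewrite !lebesgue_measure_itv /= !lte_fin ltrD2r.
  by case: ifP => // _; rewrite -!EFinD opprD addrACA subrr addr0.
Qed.

Lemma pdf_shift (m c x : R) : normal_pdf (m + c)%R 1 x = normal_pdf m 1 (x - c)%R.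
Proof. by rewrite /normal_pdf oner_eq0 /normal_fun opprD addrA addrAC. Qed.

Lemma normal_shiftE (m c : R) (A : set (measurableTypeR R)) : measurable A ->
  normal_prob (m + c)%R 1 A = normal_prob m 1 ((fun x : R => (x + c)%R) @^-1` A).
Proof.
move=> mA; rewrite /normal_prob.
have EA : A = shR c @^-1` ((fun x : R => (x + c)%R) @^-1` A).
  by apply/funext => x /=; rewrite /shR subrK.
rewrite [in LHS]EA.
under eq_integral do rewrite pdf_shift.
rewrite -(@ge0_integral_pushforward _ _ _ _ _ _ (measurable_shR c) lebesgue_measure _
  (fun x => (normal_pdf m 1 x)%:E)).
- apply: (eq_measure_integral lebesgue_measure); first exact: measurable_shR.
  by move=> ? B mB _; exact: leb_shift.
- have mp : measurable_fun setT (fun x : measurableTypeR R => (x + c)%R).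
    by apply: measurable_funD.
  by rewrite -(setTI (_ @^-1` _)); exact: mp.
- by apply/measurable_EFinP; apply: measurable_funTS; exact: measurable_normal_pdf.
- by move=> x _; rewrite lee_fin normal_pdf_ge0.
Qed.
Definition plusR (c : R) : measurableTypeR R -> measurableTypeR R := fun x => (x + c)%R.
Lemma measurable_plusR c : measurable_fun setT (plusR c).
Proof. by apply: measurable_funD. Qed.

Lemma normal_integral_shift (m c : R) (phi : measurableTypeR R -> \bar R) :
  measurable_fun setT phi -> (forall x, 0 <= phi x) ->
  \int[normal_prob (m + c)%R 1]_(t in [set: R]) phi t =
  \int[normal_prob m 1]_(t in [set: R]) phi (t + c)%R.
Proof.
move=> mphi phi0.
rewrite (eq_measure_integral (pushforward (normal_prob m 1) (plusR c))).
- exact: measurable_plusR.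
- move=> H; rewrite (@ge0_integral_pushforward _ _ _ _ _ _ (measurable_plusR c)) //.
- move=> H A mA _; change (normal_prob (m + c) 1 A = normal_prob m 1 (plusR c @^-1` A)).
  exact: normal_shiftE.
Qed.
End S.
Section G.
Variable R : realType.
Local Open Scope ereal_scope.

Lemma gauss_iter_ge0 (m : R) n (g : n.-tuple R -> \bar R) :
  (forall z, 0 <= g z) -> 0 <= gauss_iter m g.
Proof.
elim: n g => [|n IH] g g0 /=; first exact: g0.
by apply: integral_ge0 => t _; apply: IH => z.
Qed.

Lemma gauss_iter_meas (m : R) n dX (X : measurableType dX)
  (g : X * n.-tuple R -> \bar R) :
  measurable_fun setT g -> (forall p, 0 <= g p) ->
  measurable_fun setT (fun x => gauss_iter m (fun z => g (x, z))).
Proof.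
elim: n dX X g => [|n IH] dX X g mg g0 /=.
  apply: measurableT_comp => //; exact: measurable_fun_pair.
pose h := fun p : (X * R) * n.-tuple R => g (p.1.1, [tuple of p.1.2 :: p.2]).
have mh : measurable_fun setT h.
  apply: measurableT_comp => //; apply: measurable_fun_pair => /=.
  - by apply: measurableT_comp => //.
  - apply: (measurable_cons (f := fun p : (X * R) * n.-tuple R => p.1.2)
                          (g := fun p : (X * R) * n.-tuple R => p.2)) => //.
    + by apply: measurableT_comp => //.
    + exact: measurable_snd.
have := IH _ _ h mh (fun p => g0 _).
move=> mH.
have := measurable_fun_fubini_tonelli_F (m2 := normal_prob m 1) _ mH
  (fun p => gauss_iter_ge0 _ _ _ (fun z => g0 _)).
by [].
Qed.

Lemma meas_cons_sec n (g : n.+1.-tuple R -> \bar R) :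
  measurable_fun setT g ->
  measurable_fun setT (fun p : R * n.-tuple R => g [tuple of p.1 :: p.2]).
Proof.
move=> mg; apply: measurableT_comp => //.
apply: (measurable_cons (f := fun p : R * n.-tuple R => p.1)
                        (g := fun p : R * n.-tuple R => p.2)) => //;
  [exact: measurable_fst | exact: measurable_snd].
Qed.

Lemma meas_cons_t n (g : n.+1.-tuple R -> \bar R) (t : R) :
  measurable_fun setT g ->
  measurable_fun setT (fun z : n.-tuple R => g [tuple of t :: z]).
Proof.
move=> mg; apply: measurableT_comp => //.
by apply: (measurable_cons (f := fun z : n.-tuple R => t)
                        (g := fun z : n.-tuple R => z)).
Qed.

Lemma gauss_iter_meas_t (m : R) n (g : n.+1.-tuple R -> \bar R) :
  measurable_fun setT g -> (forall z, 0 <= g z) ->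
  measurable_fun setT (fun t : R => gauss_iter m (fun z : n.-tuple R => g [tuple of t :: z])).
Proof.
move=> mg g0.
exact: (@gauss_iter_meas m n _ _ _ (meas_cons_sec _ _ mg) (fun p => g0 _)).
Qed.

Lemma gauss_iterD (m : R) n (g1 g2 : n.-tuple R -> \bar R) :
  measurable_fun setT g1 -> measurable_fun setT g2 ->
  (forall z, 0 <= g1 z) -> (forall z, 0 <= g2 z) ->
  gauss_iter m (fun z => g1 z + g2 z) = gauss_iter m g1 + gauss_iter m g2.
Proof.
elim: n g1 g2 => [|n IH] g1 g2 m1 m2 p1 p2 //=.
rewrite -ge0_integralD //.
- apply: eq_integral => t _; apply: IH => //; exact: meas_cons_t.
- by move=> t _; apply: gauss_iter_ge0.
- exact: gauss_iter_meas_t.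
- by move=> t _; apply: gauss_iter_ge0.
- exact: gauss_iter_meas_t.
Qed.

Lemma gauss_iter1 (m : R) n : gauss_iter m (fun _ : n.-tuple R => 1) = 1.
Proof.
elim: n => [|n IH] //=.
under eq_integral do rewrite IH.
rewrite integral_cst // mul1e; exact: probability_setT.
Qed.

Definition shiftt (c : R) {n} (z : n.-tuple R) : n.-tuple R :=
  map_tuple (fun t => t + c)%R z.

Lemma measurable_shiftt c n : measurable_fun setT (@shiftt c n).
Proof.
apply/measurable_fun_tnthP => i.
rewrite (_ : _ \o _ = fun z => tnth z i + c)%R; last first.
  by apply/funext => z /=; rewrite tnth_map.
apply: measurable_funD => //; exact: measurable_tnth.
Qed.

Lemma gauss_iter_shift (m c : R) n (g : n.-tuple R -> \bar R) :
  measurable_fun setT g -> (forall z, 0 <= g z) ->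
  gauss_iter (m + c)%R g = gauss_iter m (fun z => g (shiftt c z)).
Proof.
elim: n g => [|n IH] g mg g0 /=.
  by congr g; apply/val_inj.
transitivity (\int[normal_prob (m + c)%R 1]_(t in [set: R])
   gauss_iter m (fun z => g [tuple of t :: shiftt c z])).
  apply: eq_integral => t _; rewrite IH //; exact: meas_cons_t.
rewrite normal_integral_shift //.
- apply: eq_integral => t _; congr gauss_iter; apply/funext => z.
  by congr g; apply/val_inj.
- pose h := fun w : n.+1.-tuple R => g [tuple of thead w :: shiftt c [tuple of behead w]].
  have mh : measurable_fun setT h.
    apply: measurableT_comp => //.
    apply: (measurable_cons (f := fun w : n.+1.-tuple R => thead w)) => //.
      exact: measurable_tnth.
    apply: measurableT_comp; first exact: measurable_shiftt.
    exact: measurable_behead.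
  have E : (fun t : R => gauss_iter m (fun z : n.-tuple R => g [tuple of t :: shiftt c z]))
     = (fun t => gauss_iter m (fun z => h [tuple of t :: z])).
    apply/funext => t; congr gauss_iter; apply/funext => z.
    by rewrite /h; congr g; apply/val_inj.
  rewrite E; exact: (gauss_iter_meas_t m _ _ mh (fun _ => g0 _)).
- by move=> t; apply: gauss_iter_ge0.
Qed.
End G.

Arguments shiftt {R} c {n} z.
Section Key.
Variable R : realType.
Local Open Scope ereal_scope.

Lemma shifttK (c : R) n (z : n.-tuple R) : shiftt (- c)%R (shiftt c z) = z.
Proof. by apply: eq_from_tnth => i; rewrite !tnth_map addrK. Qed.

Lemma indic_ge0' T (A : set T) z : (0 <= (\1_A z : R)%:E).
Proof. by rewrite lee_fin indicE. Qed.

Lemma meas_indic_set n (g : n.-tuple R -> bool) (b : bool) :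
  measurable_fun setT g ->
  measurable_fun setT (fun z => ((\1_[set z | g z = b] z : R)%:E)).
Proof.
move=> mg; apply/measurable_EFinP; apply: measurable_indic.
by rewrite -(setTI [set z | g z = b]); apply: (mg measurableT [set b]).
Qed.

Lemma key (m c : R) n (g : n.-tuple R -> bool) : measurable_fun setT g ->
  gauss_prod (m + c)%R [set z | g (shiftt (- c)%R z) = false] +
  gauss_prod m [set z | g z = true] = 1.
Proof.
move=> mg.
have mg' : measurable_fun setT (fun z => g (shiftt (- c)%R z)).
  apply: measurableT_comp => //; exact: measurable_shiftt.
rewrite /gauss_prod gauss_iter_shift; last 2 first.
- exact: meas_indic_set.
- by move=> z; exact: indic_ge0'.
have -> : (fun z => (\1_[set z | g (shiftt (- c)%R z) = false] (shiftt c z) : R)%:E)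
    = (fun z => (\1_[set z | g z = false] z : R)%:E).
  apply/funext => z; rewrite !indicE; congr ((nat_of_bool _)%:R%:E).
  by apply/idP/idP => /set_mem H; apply/mem_set; move: H => /=; rewrite shifttK.
rewrite -gauss_iterD; last 4 first.
- exact: meas_indic_set.
- exact: meas_indic_set.
- by move=> z; exact: indic_ge0'.
- by move=> z; exact: indic_ge0'.
rewrite -(@gauss_iter1 R m n); congr gauss_iter; apply/funext => z.
rewrite !indicE; case E: (g z).
- rewrite (@memNset _ [set z | g z = false] z) /=; last by rewrite E.
  by rewrite (@mem_set _ [set z | g z = true] z) //= add0e.
- rewrite (@memNset _ [set z | g z = true] z) /=; last by rewrite E.
  by rewrite (@mem_set _ [set z | g z = false] z) //= adde0.
Qed.
End Key.

Section Main.
Variables (R : realType) (d : nat) (f : @input R d -> bool) (eta : R).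
Hypothesis hf : measurable_fun setT f.
Hypothesis eta0 : (0 < eta)%R.

Definition shx (c : R) (x : @input R d) : @input R d :=
  [tuple of thead x :: shiftt c [tuple of behead x]].
Definition flipx (x : @input R d) : @input R d :=
  [tuple of (- thead x)%R :: [tuple of behead x]].
Definition cA (y : bool) : R := if y then (- (2 * eta))%R else (2 * eta)%R.
Definition PA (y : bool) : set (@input R d) := shx (cA y) @^-1` (f @^-1` [set ~~ y]).
Definition PB (y : bool) : set (@input R d) :=
  (fun x : @input R d => thead x) @^-1` ([set 1%R] `|` [set (-1)%R]) `&`
  (flipx @^-1` (f @^-1` [set ~~ y])).
Definition bset (P : bool -> set (@input R d)) : set (@input R d * bool) :=
  (P true `*` [set true]) `|` (P false `*` [set false]).

Lemma bsetP P x y : bset P (x, y) <-> P y x.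
Proof.
rewrite /bset; case: y; split => /=.
- by case=> [[]|[]].
- by move=> H; left.
- by case=> [[_]|[]].
- by move=> H; right.
Qed.

Lemma measurable_thead : measurable_fun setT (fun x : @input R d => thead x).
Proof. exact: measurable_tnth. Qed.

Lemma measurable_shx c : measurable_fun setT (shx c).
Proof.
apply: (measurable_cons (f := fun x : @input R d => thead x)).
  exact: measurable_thead.
apply: measurableT_comp; first exact: measurable_shiftt.
exact: measurable_behead.
Qed.

Lemma measurable_flipx : measurable_fun setT flipx.
Proof.
apply: (measurable_cons (f := fun x : @input R d => (- thead x)%R)).
  by apply: measurableT_comp => //; exact: measurable_thead.
exact: measurable_behead.
Qed.

Lemma measurable_pre (h : @input R d -> @input R d) (y : bool) :
  measurable_fun setT h -> measurable (h @^-1` (f @^-1` [set ~~ y])).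
Proof.
move=> mh; rewrite -(setTI (_ @^-1` _)); apply: mh => //.
by rewrite -(setTI (_ @^-1` _)); apply: hf.
Qed.

Lemma measurable_bset P : (forall y, measurable (P y)) -> measurable (bset P).
Proof. by move=> mP; apply: measurableU; apply: measurableX. Qed.

Lemma measurable_PA y : measurable (PA y).
Proof. exact: measurable_pre (measurable_shx _). Qed.

Lemma measurable_PB y : measurable (PB y).
Proof.
apply: measurableI; last exact: measurable_pre measurable_flipx.
rewrite -(setTI (_ @^-1` _)); apply: measurable_thead => //.
by apply: measurableU.
Qed.

Lemma tnth_shx c x (i : 'I_d.+1) :
  tnth (shx c x) i = if i == ord0 then tnth x i else (tnth x i + c)%R.
Proof.
rewrite !(tnth_nth 0%R); case: i => [[|k] hk] /=; first by rewrite /thead (tnth_nth 0%R).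
rewrite (nth_map 0%R); last by rewrite size_behead size_tuple -ltnS.
by rewrite nth_behead.
Qed.

Lemma tnth_flipx x (i : 'I_d.+1) :
  tnth (flipx x) i = if i == ord0 then (- tnth x i)%R else tnth x i.
Proof.
rewrite !(tnth_nth 0%R); case: i => [[|k] hk] /=; first by rewrite /thead (tnth_nth 0%R).
by rewrite nth_behead.
Qed.

Lemma PA_sub y x : PA y x -> exists x', @Sinf R d.+1 (2 * eta)%R x x' /\ f x' != y.
Proof.
move=> H; exists (shx (cA y) x); split; last by rewrite H; case: (y).
exists [tuple (tnth (shx (cA y) x) i - tnth x i)%R | i < d.+1]; split; last first.
  by move=> i; rewrite tnth_mktuple addrC subrK.
rewrite /linf_norm; apply: bigmax_le => [|i _]; first by rewrite mulr_ge0 // ltW.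
rewrite tnth_mktuple tnth_shx; case: ifP => _.
  by rewrite subrr normr0 mulr_ge0 // ltW.
rewrite addrAC subrr add0r /cA; case: y {H} => //; rewrite ?normrN gtr0_norm //;
  by rewrite mulr_gt0.
Qed.

Lemma PB_sub y x : PB y x -> exists x', @S1 R d.+1 2%R x x' /\ f x' != y.
Proof.
move=> [Hx H]; exists (flipx x); split; last by rewrite H; case: (y).
exists [tuple (tnth (flipx x) i - tnth x i)%R | i < d.+1]; split; last first.
  by move=> i; rewrite tnth_mktuple addrC subrK.
rewrite /l1_norm big_ord_recl big1 ?addr0.
  rewrite tnth_mktuple tnth_flipx eqxx.
  case: Hx; rewrite /thead /= => ->.
    rewrite (_ : (-1 - 1 : R) = - 2); last by rewrite -opprD.
    by rewrite normrN ger0_norm.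
  by rewrite opprK ger0_norm.
move=> i _; rewrite tnth_mktuple tnth_flipx /=.
by rewrite subrr normr0.
Qed.

Lemma bsetPe P x y : bset P (x, y) = P y x.
Proof. exact/propext/bsetP. Qed.

Lemma shx_cons c s (z : d.-tuple R) :
  shx c [tuple of s :: z] = [tuple of s :: shiftt c z].
Proof. by apply/val_inj. Qed.

Lemma flipx_cons s (z : d.-tuple R) :
  flipx [tuple of s :: z] = [tuple of (- s)%R :: z].
Proof. by apply/val_inj. Qed.

Lemma thead_cons s (z : d.-tuple R) : thead [tuple of s :: z] = s.
Proof. by rewrite /thead (tnth_nth 0%R). Qed.

Definition tA y s := gauss_prod (lab y * eta)%R
  (fun z : d.-tuple R => bset PA ([tuple of s :: z], y)).
Definition tB y s := gauss_prod (lab y * eta)%R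
  (fun z : d.-tuple R => bset PB ([tuple of s :: z], y)).

Lemma meas_g s : measurable_fun setT (fun w : d.-tuple R => f [tuple of s :: w]).
Proof.
apply: measurableT_comp => //.
by apply: (measurable_cons (f := fun z : d.-tuple R => s)
                        (g := fun z : d.-tuple R => z)).
Qed.

Lemma pairT s : (s = 1 \/ s = -1)%R -> (tA true s + tB false (- s)%R = 1)%E.
Proof.
move=> hs; rewrite /tA /tB.
have -> : (lab true * eta = - eta + 2 * eta)%R by rewrite /lab; lra.
have -> : (lab false * eta = - eta)%R by rewrite /lab; lra.
have -> : (fun z : d.-tuple R => bset PA ([tuple of s :: z], true)) =
   [set z : d.-tuple R | (fun w : d.-tuple R => f [tuple of s :: w]) (shiftt (- (2 * eta))%R z) = false].
  by apply/funext => z; rewrite bsetPe /PA /= shx_cons.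
have -> : (fun z : d.-tuple R => bset PB ([tuple of (- s)%R :: z], false)) =
   [set z : d.-tuple R | (fun w : d.-tuple R => f [tuple of s :: w]) z = true].
  apply/funext => z; rewrite bsetPe /PB /= flipx_cons opprK thead_cons.
  apply/propext; split; first by case.
  move=> H; split => //; case: hs => ->; [right|left] => //=.
  by rewrite opprK.
exact: key (meas_g s).
Qed.

Lemma pairF s : (s = 1 \/ s = -1)%R -> (tA false s + tB true (- s)%R = 1)%E.
Proof.
move=> hs; rewrite /tA /tB.
have -> : (lab false * eta = eta + - (2 * eta))%R by rewrite /lab; lra.
have -> : (lab true * eta = eta)%R by rewrite /lab; lra.
have mg : measurable_fun setT (fun w : d.-tuple R => ~~ f [tuple of s :: w]).
  by apply: measurableT_comp => //; exact: meas_g.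
have -> : (fun z : d.-tuple R => bset PA ([tuple of s :: z], false)) =
   [set z : d.-tuple R | (fun w : d.-tuple R => ~~ f [tuple of s :: w]) (shiftt (- (- (2 * eta)))%R z) = false].
  apply/funext => z; rewrite bsetPe /PA /= shx_cons opprK /cA.
  by apply/propext; case: (f _).
have -> : (fun z : d.-tuple R => bset PB ([tuple of (- s)%R :: z], true)) =
   [set z : d.-tuple R | (fun w : d.-tuple R => ~~ f [tuple of s :: w]) z = true].
  apply/funext => z; rewrite bsetPe /PB /= flipx_cons opprK thead_cons.
  apply/propext; split; first by case => _ ->.
  move=> H; split; last by move: H; case: (f _).
  by case: hs => ->; [right|left] => //=; rewrite opprK.
exact: key mg.
Qed.
End Main.

Lemma split1 (R : realType) (a b : \bar R) : (0 <= a)%E -> (0 <= b)%E -> (a + b = 1)%E ->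
  exists r : R, a = r%:E /\ b = (1 - r)%:E.
Proof.
case: a => [r| |] //; case: b => [s| |] // _ _ /=.
move=> [h]; exists r; split => //; congr EFin; lra.
Qed.

Theorem theorem1 (R : realType) (d : nat) (alpha p0 : R)
  (hd : (1 <= d)%N) (halpha : 0 < alpha) (hp0 : 1/2 <= p0 <= 1)
  (f : input d -> bool) (hf : measurable_fun [set: input d] f) :
  let eta := alpha / Num.sqrt (d%:R) in
  ((1/2)%:E <= Radv_avg2 alpha p0 f (@Sinf R d.+1 (2 * eta)) (@S1 R d.+1 2))%E.
Proof.
cbv zeta; set eta := alpha / Num.sqrt d%:R.
have eta0 : 0 < eta by rewrite divr_gt0 // sqrtr_gt0 ltr0n.
pose A := @bset R d (@PA R d f eta); pose B := @bset R d (@PB R d f).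
have hA : (Dist alpha p0 A <= Radv alpha p0 f (@Sinf R d.+1 (2 * eta)))%E.
  rewrite /Radv /Dprob; apply: ereal_sup_ubound; exists A => //; split.
    by apply: measurable_bset => y; exact: measurable_PA.
  by move=> [x y] /bsetP /(@PA_sub R d f eta eta0).
have hB : (Dist alpha p0 B <= Radv alpha p0 f (@S1 R d.+1 2))%E.
  rewrite /Radv /Dprob; apply: ereal_sup_ubound; exists B => //; split.
    by apply: measurable_bset => y; exact: (@measurable_PB R d f hf).
  by move=> [x y] /bsetP /(@PB_sub R d f).
have hsum : (Dist alpha p0 A + Dist alpha p0 B = 1)%E.
  rewrite /Dist /= !big_bool /=.
  have g0 : forall m (P : set (d.-tuple R)), (0 <= gauss_prod m P)%E.
    by move=> m P; apply: gauss_iter_ge0 => z; exact: indic_ge0'.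
  have [r1 [E1 F1]] := @split1 R _ _ (g0 _ _) (g0 _ _) (@pairT R d f eta hf 1 (or_introl erefl)).
  have [r2 [E2 F2]] := @split1 R _ _ (g0 _ _) (g0 _ _) (@pairT R d f eta hf (-1) (or_intror erefl)).
  have [r3 [E3 F3]] := @split1 R _ _ (g0 _ _) (g0 _ _) (@pairF R d f eta hf 1 (or_introl erefl)).
  have [r4 [E4 F4]] := @split1 R _ _ (g0 _ _) (g0 _ _) (@pairF R d f eta hf (-1) (or_intror erefl)).
  rewrite /tA /tB /lab /eta /= ?opprK in E1 F1 E2 F2 E3 F3 E4 F4.
  rewrite ?opprK E1 F1 E2 F2 E3 F3 E4 F4.
  rewrite -!EFinM -!EFinD; congr EFin; field; done.
rewrite /Radv_avg2.
have H := leeD hA hB; rewrite hsum in H.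
have := @lee_wpmul2l R (1/2)%:E _ _ _ H.
rewrite mule1; apply; rewrite lee_fin; lra.
Qed.
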